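(* Let $\mathtt{L}\in\mathcal{L}$ be a line of $\mathbb{S}$ and let $\alpha\in P\cup P'$. If $\alpha$ has distance $2$ (in $\mathbb{S}$) from two points of $\mathtt{L}$, then $\alpha$ is collinear in $\mathbb{S}$ with the third point of $\mathtt{L}$.
   Context: Let $S=(P,L)$ and $S'=(P',L')$ be generalized quadrangles of order $(2,2)$ (every line has 3 points, every point lies on 3 lines, and for each point $x$ and line $l\not\ni x$ exactly one point of $l$ is collinear with $x$), with an isomorphism $x\mapsto x'$ from $S$ to $S'$. In a point-line geometry, $x^{\perp}$ is $x$ together with all points collinear with $x$, and $A^{\perp}=\bigcap_{a\in A}a^{\perp}$. A triad is a set of three pairwise non-collinear points, complete if $|T^{\perp}|=3$. Let $\mathcal{P}=\{(x,y')\in P\times P':y'\in x'^{\perp}\}$ and $\mathcal{L}$ the set of all $3$-subsets $\{(x,u'),(y,v'),(z,w')\}$ of $\mathcal{P}$ where $T=\{x,y,z\}$ (three distinct points) is a line or complete triad of $S$ and $\{u',v',w'\}=T'^{\perp}$ in $S'$ with $u',v',w'$ distinct. The geometry $\mathbb{S}=(\mathbb{P},\mathbb{L})$ has point set $\mathbb{P}=\mathcal{P}\cup P\cup P'$ (disjoint union) and line set $\mathcal{L}\cup\{\{x,(x,u'),u'\}:(x,u')\in\mathcal{P}\}$. Distances are in the collinearity graph of $\mathbb{S}$. *)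

(* Defs.v *)
From mathcomp Require Import all_boot.
Set Implicit Arguments. Unset Strict Implicit. Unset Printing Implicit Defensive.

Definition collinear (P : finType) (L : {set {set P}}) (x y : P) : bool :=
  (x != y) && [exists l in L, (x \in l) && (y \in l)].

Definition GQ22 (P : finType) (L : {set {set P}}) : Prop :=
  [/\ (forall l, l \in L -> #|l| = 3),
      (forall x : P, #|[set l in L | x \in l]| = 3) &
      (forall (x : P) (l : {set P}), l \in L -> x \notin l ->
         exists! y, y \in l /\ collinear L x y)].

Definition perp (P : finType) (L : {set {set P}}) (x : P) : {set P} :=
  [set y | (y == x) || collinear L x y].

Definition setperp (P : finType) (L : {set {set P}}) (A : {set P}) : {set P} :=
  \bigcap_(a in A) perp L a.

Definition triad (P : finType) (L : {set {set P}}) (T : {set P}) : Prop :=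
  #|T| = 3 /\ (forall x y, x \in T -> y \in T -> x != y -> ~~ collinear L x y).

Definition complete_triad (P : finType) (L : {set {set P}}) (T : {set P}) : Prop :=
  triad L T /\ #|setperp L T| = 3.

(* isomorphism x |-> x' = f x from S=(P,L) to S'=(P',L') *)
Definition geom_iso (P P' : finType) (L : {set {set P}}) (L' : {set {set P'}})
  (f : P -> P') : Prop :=
  bijective f /\ (forall l : {set P}, (f @: l \in L') = (l \in L)).

(* points of the geometry bbS: (P x P') + (P + P');
   inl (x,y') for elements of calP, inr (inl x) for x in P,
   inr (inr u') for u' in P'. Only inl-elements in calP are genuine points;
   the others lie on no line. *)
Definition bbPt (P P' : finType) := ((P * P') + (P + P'))%type.

Definition calP (P P' : finType) (L' : {set {set P'}}) (f : P -> P')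
  (p : P * P') : Prop := p.2 \in perp L' (f p.1).

Definition calL (P P' : finType) (L : {set {set P}}) (L' : {set {set P'}})
  (f : P -> P') (B : {set bbPt P P'}) : Prop :=
  exists (x y z : P) (u v w : P'),
    [/\ x != y, y != z & x != z] /\
    ([set x; y; z] \in L \/ complete_triad L [set x; y; z]) /\
    [set u; v; w] = setperp L' (f @: [set x; y; z]) /\
    [/\ u != v, v != w & u != w] /\
    [/\ calP L' f (x, u), calP L' f (y, v) & calP L' f (z, w)] /\
    B = [set inl (x, u); inl (y, v); inl (z, w)].

Definition bbLine (P P' : finType) (L : {set {set P}}) (L' : {set {set P'}})
  (f : P -> P') (B : {set bbPt P P'}) : Prop :=
  calL L L' f B \/
  exists (x : P) (u : P'), calP L' f (x, u) /\
    B = [set inr (inl x); inl (x, u); inr (inr u)].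

Definition bbColl (P P' : finType) (L : {set {set P}}) (L' : {set {set P'}})
  (f : P -> P') (a b : bbPt P P') : Prop :=
  a <> b /\ exists B, bbLine L L' f B /\ a \in B /\ b \in B.

Definition bbDist2 (P P' : finType) (L : {set {set P}}) (L' : {set {set P'}})
  (f : P -> P') (a b : bbPt P P') : Prop :=
  a <> b /\ ~ bbColl L L' f a b /\
  exists c, bbColl L L' f a c /\ bbColl L L' f c b.

(* Main.v *)
Require Import Defs.
From mathcomp Require Import all_boot.
Set Implicit Arguments. Unset Strict Implicit.

Section GQ.
Variables (Q : finType) (M : {set {set Q}}).

Lemma coll_sym a b : collinear M a b = collinear M b a.
Proof.
rewrite /collinear eq_sym; congr (_ && _).
by apply/existsP/existsP => -[l /andP[lM /andP[H1 H2]]]; exists l; rewrite lM H1 H2.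
Qed.

Lemma perp_sym a b : (a \in perp M b) = (b \in perp M a).
Proof. by rewrite !inE eq_sym coll_sym. Qed.

Lemma perp_neq {a b} : a \in perp M b -> a != b -> collinear M b a.
Proof. by rewrite inE => /orP[/eqP->|//]; rewrite eqxx. Qed.

Lemma in_setperp {t A} : (t \in setperp M A) -> forall a, a \in A -> t \in perp M a.
Proof. by move/bigcapP. Qed.

Lemma line_perp l p q c : GQ22 M -> l \in M -> p \in l -> q \in l -> p != q ->
  c \in perp M p -> c \in perp M q -> c \in l.
Proof.
case=> _ _ Hu lM pl ql npq cp cq; apply/negPn/negP => cl.
have cnp : c != p by apply: contraNneq cl => ->.
have cnq : c != q by apply: contraNneq cl => ->.
have [y [_ Hy]] := Hu c l lM cl.
have e1 := Hy p (conj pl (etrans (coll_sym _ _) (perp_neq cp cnp))).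
have e2 := Hy q (conj ql (etrans (coll_sym _ _) (perp_neq cq cnq))).
by move: npq; rewrite -e1 -e2 eqxx.
Qed.

Lemma on_line_perp l p q : l \in M -> p \in l -> q \in l -> p \in perp M q.
Proof.
move=> lM pl ql; rewrite inE; case: eqP => //= /eqP ne.
rewrite /collinear eq_sym ne /=; apply/existsP; exists l; by rewrite lM pl ql.
Qed.

Lemma pigeon p q c1 c2 c3 c4 : GQ22 M -> p != q -> ~~ collinear M p q ->
  uniq [:: c1; c2; c3; c4] ->
  all (fun c => (c \in perp M p) && (c \in perp M q)) [:: c1; c2; c3; c4] -> False.
Proof.
move=> [_ Hc Hu] npq ncpq U A.
set s := [:: c1; c2; c3; c4] in U A.
have Hs : forall c, c \in s -> [/\ c \in perp M p, c \in perp M q, c != p & c != q].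
  move=> c cs; move/allP: A => /(_ c cs) /andP[cp cq]; split => //.
    apply: contraNneq ncpq => E; rewrite E in cq; rewrite coll_sym.
    exact: perp_neq cq npq.
  apply: contraNneq ncpq => E; rewrite E in cp.
  by apply: (perp_neq cp); rewrite eq_sym.
pose g c := odflt set0 [pick l in M | (p \in l) && (c \in l)].
have Hg : forall c, c \in s -> [/\ g c \in M, p \in g c & c \in g c].
  move=> c /Hs [cp _ cnp _]; have := perp_neq cp cnp.
  case/andP => _ /existsP [l /andP [lM /andP [pl cl]]].
  rewrite /g; case: pickP => [l' /andP [-> /andP [-> ->]] //|].
  by move/(_ l); rewrite lM pl cl.
have ginj : {in s &, injective g}.
  move=> a b as_ bs E.
  have [gM pg ag] := Hg a as_; have [_ _ bg] := Hg b bs; rewrite -E in bg.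
  have qg : q \notin g a.
    apply: contra ncpq => qg; rewrite /collinear npq; apply/existsP; exists (g a).
    by rewrite gM pg qg.
  have [y [_ Hy]] := Hu q (g a) gM qg.
  have [ap aq anp anq] := Hs a as_; have [bp bq bnp bnq] := Hs b bs.
  have e1 := Hy a (conj ag (perp_neq aq anq)).
  have e2 := Hy b (conj bg (perp_neq bq bnq)).
  by rewrite -e1 -e2.
have : size (map g s) <= size (enum [set l in M | p \in l]).
  apply: uniq_leq_size; first by rewrite map_inj_in_uniq.
  move=> l /mapP [c cs ->]; rewrite mem_enum inE; have [-> -> _] := Hg c cs; done.
by rewrite -cardE Hc size_map.
Qed.
End GQ.

Section Iso.
Variables (P P' : finType) (L : {set {set P}}) (L' : {set {set P'}}) (f : P -> P').
Hypothesis Hiso : geom_iso L L' f.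

Lemma iso_inj : injective f.
Proof. by case: Hiso => /bij_inj. Qed.

Lemma iso_line l : l \in L -> f @: l \in L'.
Proof. by case: Hiso => _ ->. Qed.

Lemma coll_iso a b : collinear L' (f a) (f b) = collinear L a b.
Proof.
rewrite /collinear (inj_eq iso_inj); congr (_ && _).
apply/existsP/existsP => -[l /andP [lM /andP [al bl]]].
  case: Hiso => [[g fg gf] Hl].
  exists (g @: l).
  have E : f @: (g @: l) = l.
    apply/setP => t; apply/imsetP/idP => [[t' /imsetP [t'' t''l ->] ->]|tl].
      by rewrite gf.
    by exists (g t); [apply: imset_f | rewrite gf].
  rewrite -Hl E lM /=.
  by rewrite -(fg a) -(fg b) !imset_f.
by exists (f @: l); rewrite iso_line // !imset_f.
Qed.

Lemma triv_bbLine x u : u \in perp L' (f x) ->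
  bbLine L L' f [set inr (inl x); inl (x, u); inr (inr u)].
Proof. by move=> H; right; exists x, u. Qed.

Lemma collP x u : u \in perp L' (f x) -> bbColl L L' f (inr (inl x)) (inl (x, u)).
Proof.
move=> H; split => //; exists [set inr (inl x); inl (x, u); inr (inr u)].
split; first exact: triv_bbLine.
by split; rewrite !inE eqxx ?orbT.
Qed.

Lemma collP' x u : u \in perp L' (f x) -> bbColl L L' f (inr (inr u)) (inl (x, u)).
Proof.
move=> H; split => //; exists [set inr (inl x); inl (x, u); inr (inr u)].
split; first exact: triv_bbLine.
by split; rewrite !inE eqxx ?orbT.
Qed.

Lemma calL_noinr B s : calL L L' f B -> inr s \in B -> False.
Proof.
case=> x [y [z [u [v [w [_ [_ [_ [_ [_ ->]]]]]]]]]].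
by rewrite !inE.
Qed.

Lemma calL_inl B p q : calL L L' f B -> inl p \in B -> inl q \in B ->
  q.2 \in perp L' (f p.1).
Proof.
case=> x [y [z [u [v [w [_ [_ [Hs [_ [_ ->]]]]]]]]]] Hp Hq.
have H1 : p.1 \in [set x; y; z].
  by move: Hp; rewrite !inE => /orP [/orP []|] /eqP [->]; rewrite eqxx ?orbT.
have H2 : q.2 \in [set u; v; w].
  by move: Hq; rewrite !inE => /orP [/orP []|] /eqP [->]; rewrite eqxx ?orbT.
rewrite Hs in H2; apply: (in_setperp H2); exact: imset_f.
Qed.

Lemma mem_triv (x0 : P) (u0 : P') (s : bbPt P P') :
  s \in [set inr (inl x0); inl (x0, u0); inr (inr u0)] ->
  [\/ s = inr (inl x0), s = inl (x0, u0) | s = inr (inr u0)].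
Proof. by rewrite !inE => /orP [/orP [] | ] /eqP ->; [constructor 1|constructor 2|constructor 3]. Qed.

Lemma mt_P (x0 a : P) (u0 : P') :
  inr (inl a) \in [set inr (inl x0); inl (x0, u0); inr (inr u0)] -> a = x0.
Proof. by case/mem_triv => // -[]. Qed.
Lemma mt_P' (x0 : P) (u0 b : P') :
  inr (inr b) \in [set inr (inl x0); inl (x0, u0); inr (inr u0)] -> b = u0.
Proof. by case/mem_triv => // -[]. Qed.
Lemma mt_in (x0 : P) (u0 : P') p :
  inl p \in [set inr (inl x0); inl (x0, u0); inr (inr u0)] -> p = (x0, u0).
Proof. by case/mem_triv => // -[]. Qed.

Lemma dist2_P a x u : u \in perp L' (f x) ->
  bbDist2 L L' f (inr (inl a)) (inl (x, u)) -> a != x /\ u \in perp L' (f a).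
Proof.
move=> Hxu [_ [Hnc [c [[Hac [B1 [HB1 [Ha1 Hc1]]]] [Hcb [B2 [HB2 [Hc2 Hb2]]]]]]]].
split.
  by apply/eqP => Eax; apply: Hnc; rewrite Eax; exact: collP.
case: HB1 => [HB1|[x0 [u0 [Hxu0 EB1]]]]; first by case: (calL_noinr HB1 Ha1).
move: Ha1 Hc1; rewrite EB1 => /mt_P Ea; subst x0.
case/mem_triv => Ec; subst c.
- by case: Hac.
- case: HB2 => [HB2|[x1 [u1 [Hxu1 EB2]]]].
    exact: (calL_inl HB2 Hc2 Hb2).
  move: Hc2 Hb2; rewrite EB2 => /mt_in [E1 E2] /mt_in [E3 E4].
  by case: Hcb; subst.
- case: HB2 => [HB2|[x1 [u1 [Hxu1 EB2]]]]; first by case: (calL_noinr HB2 Hc2).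
  move: Hc2 Hb2; rewrite EB2 => /mt_P' E1 /mt_in [E3 E4].
  by subst.
Qed.

Lemma dist2_P' b x u : u \in perp L' (f x) ->
  bbDist2 L L' f (inr (inr b)) (inl (x, u)) -> b != u /\ b \in perp L' (f x).
Proof.
move=> Hxu [_ [Hnc [c [[Hac [B1 [HB1 [Ha1 Hc1]]]] [Hcb [B2 [HB2 [Hc2 Hb2]]]]]]]].
split.
  by apply/eqP => Eax; apply: Hnc; rewrite Eax; exact: collP'.
case: HB1 => [HB1|[x0 [u0 [Hxu0 EB1]]]]; first by case: (calL_noinr HB1 Ha1).
move: Ha1 Hc1; rewrite EB1 => /mt_P' Ea; subst u0.
case/mem_triv => Ec; subst c.
- case: HB2 => [HB2|[x1 [u1 [Hxu1 EB2]]]]; first by case: (calL_noinr HB2 Hc2).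
  move: Hc2 Hb2; rewrite EB2 => /mt_P E1 /mt_in [E3 E4].
  by subst.
- case: HB2 => [HB2|[x1 [u1 [Hxu1 EB2]]]].
    exact: (calL_inl HB2 Hb2 Hc2).
  move: Hc2 Hb2; rewrite EB2 => /mt_in [E1 E2] /mt_in [E3 E4].
  by case: Hcb; subst.
- by case: Hac.
Qed.
End Iso.

Section Core.
Variables (P P' : finType) (L : {set {set P}}) (L' : {set {set P'}}) (f : P -> P').
Hypothesis Hiso : geom_iso L L' f.
Hypothesis GQ : GQ22 L.
Hypothesis GQ' : GQ22 L'.

Lemma core T x y z u v w alpha :
  (T \in L \/ complete_triad L T) ->
  (forall t, (t \in T) = [|| t == x, t == y | t == z]) ->
  x != y -> y != z -> x != z -> u != v -> v != w -> u != w ->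
  (forall t, (t \in setperp L' (f @: T)) = [|| t == u, t == v | t == w]) ->
  bbDist2 L L' f (inr alpha) (inl (x, u)) -> bbDist2 L L' f (inr alpha) (inl (y, v)) ->
  bbColl L L' f (inr alpha) (inl (z, w)).
Proof.
move=> HT HTm nxy nyz nxz nuv nvw nuw HS.
have inj := iso_inj Hiso.
have xT : x \in T by rewrite HTm eqxx.
have yT : y \in T by rewrite HTm eqxx orbT.
have zT : z \in T by rewrite HTm eqxx !orbT.
have Hp : forall t a, [|| t == u, t == v | t == w] -> a \in T -> t \in perp L' (f a).
  by move=> t a; rewrite -HS => /in_setperp H aT; apply: H; apply: imset_f.
have hxu : u \in perp L' (f x) by apply: Hp; rewrite ?eqxx.
have hyu : u \in perp L' (f y) by apply: Hp; rewrite ?eqxx.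
have hxv : v \in perp L' (f x) by apply: Hp; rewrite ?eqxx ?orbT.
have hyv : v \in perp L' (f y) by apply: Hp; rewrite ?eqxx ?orbT.
have hxw : w \in perp L' (f x) by apply: Hp; rewrite ?eqxx ?orbT.
have hyw : w \in perp L' (f y) by apply: Hp; rewrite ?eqxx ?orbT.
have hzw : w \in perp L' (f z) by apply: Hp; rewrite ?eqxx ?orbT.
have fxy : f x != f y by rewrite (inj_eq inj).
case: alpha => [a|b].
- move=> /(dist2_P hxu) [ax ua] /(dist2_P hyv) [ay va].
  suff -> : a = z by apply: collP.
  case: HT => [TL|[[_ Htr] _]].
  + have lL := iso_line Hiso TL.
    have fxT : f x \in f @: T by apply: imset_f.
    have fyT : f y \in f @: T by apply: imset_f.
    have uT : u \in f @: T by apply: (line_perp GQ' lL fxT fyT fxy).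
    have vT : v \in f @: T by apply: (line_perp GQ' lL fxT fyT fxy).
    have : f a \in f @: T by apply: (line_perp GQ' lL uT vT nuv); rewrite perp_sym.
    rewrite mem_imset // HTm (negbTE ax) (negbTE ay) /=; by move/eqP.
  + apply/eqP/negPn/negP => naz.
    have ncuv : ~~ collinear L' u v.
      apply/negP => /andP [_ /existsP [l /andP [lM /andP [ul vl]]]].
      have fxl : f x \in l by apply: (line_perp GQ' lM ul vl nuv); rewrite perp_sym.
      have fyl : f y \in l by apply: (line_perp GQ' lM ul vl nuv); rewrite perp_sym.
      have : collinear L' (f x) (f y).
        by rewrite /collinear fxy; apply/existsP; exists l; rewrite lM fxl fyl.
      by rewrite (coll_iso Hiso); apply/negP; apply: Htr.
    apply: (pigeon GQ' nuv ncuv (c1 := f x) (c2 := f y) (c3 := f z) (c4 := f a)).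
      rewrite /= !inE !(inj_eq inj) !negb_or nxy nxz nyz /=.
      by rewrite !(eq_sym _ a) ax ay naz.
    by rewrite /= -!(perp_sym _ u) -!(perp_sym _ v) ua va hxu hxv hyu hyv
        (Hp u z) ?(Hp v z) ?eqxx ?orbT.
- move=> /(dist2_P' hxu) [bu bx] /(dist2_P' hyv) [bv by_].
  suff -> : b = w by apply: collP'.
  case: HT => [TL|[[_ Htr] _]].
  + have lL := iso_line Hiso TL.
    have fxT : f x \in f @: T by apply: imset_f.
    have fyT : f y \in f @: T by apply: imset_f.
    have bT : b \in f @: T by apply: (line_perp GQ' lL fxT fyT fxy).
    have : b \in setperp L' (f @: T).
      by apply/bigcapP => c cT; apply: (on_line_perp lL).
    by rewrite HS (negbTE bu) (negbTE bv) /= => /eqP.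
  + apply/eqP/negPn/negP => nbw.
    have ncxy : ~~ collinear L' (f x) (f y) by rewrite (coll_iso Hiso); apply: Htr.
    apply: (pigeon GQ' fxy ncxy (c1 := u) (c2 := v) (c3 := w) (c4 := b)).
      by rewrite /= !inE !negb_or nuv nuw nvw !(eq_sym _ b) bu bv nbw.
    by rewrite /= hxu hxv hxw hyu hyv hyw bx by_.
Qed.
End Core.

Theorem proposition4p7 (P P' : finType) (L : {set {set P}}) (L' : {set {set P'}})
  (f : P -> P') :
  GQ22 L -> GQ22 L' -> geom_iso L L' f ->
  forall (B : {set bbPt P P'}), calL L L' f B ->
  forall (alpha : P + P') (p q r : bbPt P P'),
    p \in B -> q \in B -> r \in B -> p != q -> q != r -> p != r ->
    bbDist2 L L' f (inr alpha) p -> bbDist2 L L' f (inr alpha) q ->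
    bbColl L L' f (inr alpha) r.
Proof.
move=> GQ GQ' Hiso B [x [y [z [u [v [w [[nxy nyz nxz] [HT [Hs [[nuv nvw nuw] [_ EB]]]]]]]]]]].
move=> alpha p q r; rewrite EB !inE.
have HS : forall t, (t \in setperp L' (f @: [set x; y; z])) = [|| t == u, t == v | t == w].
  by move=> t; rewrite -Hs !inE orbA.
move=> /orP [/orP []|] /eqP -> /orP [/orP []|] /eqP -> /orP [/orP []|] /eqP ->;
  rewrite ?eqxx // => _ _ _ d1 d2;
  apply: (core Hiso GQ' HT _ _ _ _ _ _ _ _ d1 d2);
  try (by move=> t; rewrite ?HS ?inE; case: (t == x); case: (t == y); case: (t == z));
  try (by move=> t; rewrite ?HS ?inE; case: (t == u); case: (t == v); case: (t == w));
  first [done | by rewrite eq_sym].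
Qed.
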